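(* Let $i_1,\dots,i_r$ be integers with $\sum_{s=1}^r i_s=1$ and let $\mathbf{m}=(m_1,\dots,m_r)\in\mathbb{Z}^r$ with $\sum_{s=1}^r m_s=0$. Put $k_s=i_s+m_s(q-1)$ and let $\phi^{\mathbf m}:A\to K\{\tau\}$ be determined by $$\phi^{\mathbf m}_t=(-1)^{r-1}\,(\tau-(-t)^{k_r})(\tau-(-t)^{k_{r-1}})\cdots(\tau-(-t)^{k_1}).$$ Then $\phi^{\mathbf m}$ is a rank-$r$ Drinfeld module over $K$ with $[\phi^{\mathbf m}]\in\mathscr{D}(K,r,t)$, and its mod $t$ representation $\bar\rho_{\phi^{\mathbf m},t}$ is isomorphic to an upper triangular representation with diagonal characters $\chi_t^{i_1},\chi_t^{i_2},\dots,\chi_t^{i_r}$ (in this order).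
   Context: $p$ prime, $q$ a power of $p$, $A=\mathbb{F}_q[t]$, $F=\mathbb{F}_q(t)$, $K$ a finite extension of $F$, $r\ge1$. $K\{\tau\}$ is the twisted polynomial ring with $\tau c=c^q\tau$. A rank-$r$ Drinfeld module over $K$ is an $\mathbb{F}_q$-algebra homomorphism $\phi:A\to K\{\tau\}$ with $\phi_t=t+c_1\tau+\cdots+c_r\tau^r$, $c_r\ne0$; isomorphisms are $\psi_a=c\phi_ac^{-1}$. For monic irreducible $\pi$, $\mathbb{F}_\pi=A/\pi A$, $q_\pi=\#\mathbb{F}_\pi$; $\phi[\pi]=\{\lambda\in K^{\rm sep}:\phi_\pi(\lambda)=0\}$ gives $\bar\rho_{\phi,\pi}:G_K\to\mathrm{GL}_r(\mathbb{F}_\pi)$. Good reduction at finite $v$: isomorphic over $K_v$ to $\psi$ with $\psi_t=t+\sum c_i'\tau^i$, $c_i'\in\mathcal{O}_{K_v}$, $c_r'\in\mathcal{O}_{K_v}^\times$. Carlitz module $\mathcal{C}_t=t+\tau$, mod $\pi$ Carlitz character $\chi_\pi:G_K\to\mathrm{Aut}(\mathcal{C}[\pi])=\mathbb{F}_\pi^\times$ (here $\pi=t$, $\mathbb{F}_t=\mathbb{F}_q$). $\mathscr{D}(K,r,\pi)$: $K$-isomorphism classes of rank-$r$ $\phi$ with (D1) good reduction at all finite places not above $\pi$, (D2) $\bar\rho_{\phi,\pi}$ isomorphic to upper triangular with diagonal $\chi_\pi^{j_1},\dots,\chi_\pi^{j_r}$ for some $0\le j_s\le q_\pi-1$. *)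

(* Defs.v *)
From HB Require Import structures.
From mathcomp Require Import all_boot all_order all_algebra all_field fraction.
Set Implicit Arguments. Unset Strict Implicit. Unset Printing Implicit Defensive.
Import Order.TTheory GRing.Theory Num.Theory.
Local Open Scope ring_scope.

Notation FF Fq := ({fraction {poly Fq}}).

Definition qq (Fq : finFieldType) : nat := #|Fq|.

Definition AtoK (Fq : finFieldType) (K : fieldExtType (FF Fq)) (a : {poly Fq}) : K :=
  (FracField.tofrac a)%:A.
Definition tK (Fq : finFieldType) (K : fieldExtType (FF Fq)) : K := AtoK K 'X.

(* Twisted polynomials in K{tau} are represented by their coefficient
   sequences ({poly K}, the coefficient of X^i being that of tau^i), with the
   twisted product (sum a_i tau^i)(sum b_j tau^j) = sum a_i b_j^(q^i) tau^(i+j). *)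
Definition tmul (Fq : finFieldType) (K : fieldExtType (FF Fq)) (P Q : {poly K})
  : {poly K} :=
  \poly_(k < (size P + size Q).-1)
     \sum_(j < k.+1) P`_j * (Q`_(k - j)) ^+ (qq Fq ^ j)%N.

Fixpoint tprod (Fq : finFieldType) (K : fieldExtType (FF Fq))
  (f : nat -> {poly K}) (n : nat) : {poly K} :=
  match n with
  | 0 => 1
  | n'.+1 => tmul (f n') (tprod f n')
  end.

(* phi^m_t = (-1)^(r-1) (tau - (-t)^(k_r)) ... (tau - (-t)^(k_1)),
   k_s = i_s + m_s (q-1); indices s = 1..r are encoded as 0..r-1. *)
Definition phim_t (Fq : finFieldType) (K : fieldExtType (FF Fq)) (r : nat)
  (i m : nat -> int) : {poly K} :=
  ((-1) ^+ r.-1) *: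
    tprod (fun s => 'X - ((- tK K) ^ (i s + m s * ((qq Fq)%:Z - 1)))%:P) r.

(* phi_t = t + c_1 tau + ... + c_r tau^r with c_r <> 0 : phi_t determines the
   F_q-algebra homomorphism A -> K{tau} of a rank-r Drinfeld module. *)
Definition is_drinfeld_rank (Fq : finFieldType) (K : fieldExtType (FF Fq))
  (r : nat) (P : {poly K}) : Prop :=
  P`_0 = tK K /\ size P = r.+1.

(* normalized discrete valuation on K (value at 0 irrelevant) *)
Definition is_dval (Fq : finFieldType) (K : fieldExtType (FF Fq)) (v : K -> int)
  : Prop :=
  (forall x y : K, x != 0 -> y != 0 -> v (x * y) = v x + v y) /\
  (forall x y : K, x != 0 -> y != 0 -> x + y != 0 ->
      Num.min (v x) (v y) <= v (x + y)) /\
  (forall n : int, exists x : K, x != 0 /\ v x = n).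

Definition finite_place (Fq : finFieldType) (K : fieldExtType (FF Fq))
  (v : K -> int) : Prop :=
  forall a : {poly Fq}, a != 0 -> 0 <= v (AtoK K a).

Definition above_t (Fq : finFieldType) (K : fieldExtType (FF Fq))
  (v : K -> int) : Prop := 0 < v (tK K).

(* good reduction at v: some c psi_t c^-1 has integral coefficients and
   unit leading coefficient (c taken in K) *)
Definition good_red (Fq : finFieldType) (K : fieldExtType (FF Fq)) (r : nat)
  (v : K -> int) (P : {poly K}) : Prop :=
  exists c : K, c != 0 /\
    let psi := tmul c%:P (tmul P (c^-1)%:P) in
    (forall j, (1 <= j <= r)%N -> psi`_j = 0 \/ 0 <= v psi`_j) /\
    psi`_r != 0 /\ v psi`_r = 0.

Definition D1 (Fq : finFieldType) (K : fieldExtType (FF Fq)) (r : nat)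
  (P : {poly K}) : Prop :=
  forall v : K -> int, is_dval v -> finite_place v -> ~ above_t v ->
    good_red r v P.

(* Galois side: Omega an algebraically closed field containing K via iota;
   G_K is realized by the automorphisms of Omega fixing iota(K). *)
Definition fqO (Fq : finFieldType) (K : fieldExtType (FF Fq))
  (Om : closedFieldType) (iota : {rmorphism K -> Om}) (a : Fq) : Om :=
  iota (AtoK K a%:P).

Definition tors (Fq : finFieldType) (K : fieldExtType (FF Fq))
  (Om : closedFieldType) (iota : {rmorphism K -> Om}) (P : {poly K}) (x : Om)
  : bool :=
  \sum_(j < size P) iota P`_j * x ^+ (qq Fq ^ j)%N == 0.

Definition carlitz_tors (Fq : finFieldType) (K : fieldExtType (FF Fq))
  (Om : closedFieldType) (iota : {rmorphism K -> Om}) (x : Om) : bool :=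
  iota (tK K) * x + x ^+ qq Fq == 0.

Definition is_Kaut (Fq : finFieldType) (K : fieldExtType (FF Fq))
  (Om : closedFieldType) (iota : {rmorphism K -> Om}) (sigma : {rmorphism Om -> Om})
  : Prop :=
  bijective sigma /\ forall x : K, sigma (iota x) = iota x.

(* bar rho_{phi,t} is isomorphic to an upper triangular representation whose
   s-th diagonal character is  sigma |-> diag (chi_t sigma) s :
   there is an F_q-basis e_1..e_r of phi[t] such that for every sigma,
   sigma(e_s) = diag(chi_t(sigma)) s * e_s + sum_{u<s} b_u e_u,
   where chi_t(sigma) = c is the scalar by which sigma acts on C[t]. *)
Definition tri_rep (Fq : finFieldType) (K : fieldExtType (FF Fq))
  (Om : closedFieldType) (iota : {rmorphism K -> Om}) (r : nat) (P : {poly K})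
  (diag : Fq -> 'I_r -> Fq) : Prop :=
  exists e : 'I_r -> Om,
    (forall s, tors iota P (e s)) /\
    (forall a : 'I_r -> Fq, \sum_s fqO iota (a s) * e s = 0 -> forall s, a s = 0) /\
    (forall x, tors iota P x -> exists a : 'I_r -> Fq, x = \sum_s fqO iota (a s) * e s) /\
    (forall sigma : {rmorphism Om -> Om}, is_Kaut iota sigma ->
       exists c : Fq, c != 0 /\
         (forall x, carlitz_tors iota x -> sigma x = fqO iota c * x) /\
         (forall s : 'I_r, exists b : 'I_r -> Fq,
            sigma (e s) = \sum_(u < r | (u < s)%N) fqO iota (b u) * e u
                          + fqO iota (diag c s) * e s)).

(* (D2) for pi = t, q_pi = q *)
Definition D2 (Fq : finFieldType) (K : fieldExtType (FF Fq))
  (Om : closedFieldType) (iota : {rmorphism K -> Om}) (r : nat) (P : {poly K})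
  : Prop :=
  exists j : 'I_r -> nat, (forall s, j s <= qq Fq - 1)%N /\
    tri_rep iota P (fun c s => c ^+ j s).

Definition in_D (Fq : finFieldType) (K : fieldExtType (FF Fq))
  (Om : closedFieldType) (iota : {rmorphism K -> Om}) (r : nat) (P : {poly K})
  : Prop :=
  is_drinfeld_rank r P /\ D1 r P /\ D2 iota r P.

(* Main.v *)
Require Import Defs.
From HB Require Import structures.
From mathcomp Require Import all_boot all_order all_algebra all_field fraction.
From mathcomp Require Import zify.
Import Order.TTheory GRing.Theory Num.Theory.
Local Open Scope ring_scope.

Section Frob.
Variables (Fq : finFieldType) (K : fieldExtType (FF Fq)) (Om : closedFieldType) (iota : {rmorphism K -> Om}).
Local Notation q := (qq Fq).
Definition fqrm : {rmorphism Fq -> Om} := (iota \o in_alg K \o (@FracField.tofrac _) \o (@polyC Fq))%FUN.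
Lemma fqOE c : fqO iota c = fqrm c. Proof. by []. Qed.

Lemma q_gt1 : (1 < q)%N.
Proof. exact: card_finNzRing_gt1. Qed.

Lemma frobD (x y : Om) : (x + y) ^+ q = x ^+ q + y ^+ q.
Proof.
have [p pr pch] := finPcharP Fq.
have pchO : p \in [pchar Om] := rmorph_pchar fqrm pch.
have hq : #|Fq| = (p ^ logn p #|Fq|)%N := card_pprimeChar pch.
rewrite /qq hq; elim: (logn _ _) => [|n IH]; first by rewrite !expr1.
by rewrite expnSr !exprM IH -!(pFrobenius_autE pchO) rmorphD.
Qed.

Lemma frobM (x y : Om) : (x * y) ^+ q = x ^+ q * y ^+ q.
Proof. exact: exprMn. Qed.

Lemma frobN (x : Om) : (- x) ^+ q = - x ^+ q.
Proof.
have := frobD (- x) x; rewrite addNr expr0n; case: q q_gt1 => // n _ /=.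
by move/esym/eqP; rewrite addr_eq0 => /eqP.
Qed.

Lemma frobB (x y : Om) : (x - y) ^+ q = x ^+ q - y ^+ q.
Proof. by rewrite frobD frobN. Qed.

Lemma frob_sum I (s : seq I) (P : pred I) (F : I -> Om) :
  (\sum_(j <- s | P j) F j) ^+ q = \sum_(j <- s | P j) F j ^+ q.
Proof.
apply: (big_morph (fun x => x ^+ q)) => [x y|]; first exact: frobD.
by rewrite expr0n; case: q q_gt1.
Qed.

Lemma fqO_frob c : (fqO iota c) ^+ q = fqO iota c.
Proof. by rewrite fqOE -rmorphXn /qq expf_card. Qed.

Lemma fqO_inj : injective (fqO iota).
Proof. move=> a b; rewrite !fqOE; exact: fmorph_inj. Qed.

Lemma fixq_fq (z : Om) : z ^+ q = z -> exists c, z = fqO iota c.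
Proof.
move=> hz; case: (pickP (fun c => z == fqO iota c)) => [c /eqP hc|hn]; first by exists c.
exfalso.
pose rs := z :: [seq fqO iota c | c <- enum Fq].
have p0 : ('X^q - 'X : {poly Om}) != 0.
  rewrite -size_poly_eq0 size_polyDl ?size_polyXn ?size_polyN ?size_polyX //.
  by rewrite ltnS q_gt1.
have Hall : all (root ('X^q - 'X)) rs.
  apply/allP => x; rewrite inE => /orP[/eqP->|/mapP[c _ ->]];
   by rewrite rootE !hornerE ?fqO_frob ?hz subrr.
have Hu : uniq rs.
  rewrite /= map_inj_uniq ?enum_uniq ?andbT; last exact: fqO_inj.
  by apply/mapP => -[c _ hc]; have := hn c; rewrite hc eqxx.
have := max_poly_roots p0 Hall Hu.
by rewrite size_polyDl ?size_polyXn ?size_polyN ?size_polyX ?ltnS ?q_gt1 //= size_map -cardE ltnn.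
Qed.

Definition ev (P : {poly K}) (n : nat) (x : Om) :=
  \sum_(j < n) iota P`_j * x ^+ (q ^ j).

Lemma ev_ext (P : {poly K}) n x : (size P <= n)%N -> ev P n x = ev P (size P) x.
Proof.
move=> h; rewrite /ev; elim: n h => [|n IH]; first by rewrite leqn0 size_poly_eq0 => /eqP->; rewrite size_poly0.
rewrite leq_eqVlt => /orP[/eqP<-//|h]; rewrite big_ord_recr /= IH //.
by rewrite nth_default // rmorph0 mul0r addr0.
Qed.

Lemma ev_scale (c : K) (P : {poly K}) x : c != 0 ->
  ev (c *: P) (size (c *: P)) x = iota c * ev P (size P) x.
Proof.
move=> c0; rewrite size_scale // /ev mulr_sumr; apply: eq_bigr => j _.
by rewrite coefZ rmorphM mulrA.
Qed.

Lemma coef_tmulX (a : K) (Q : {poly K}) k : (k < (size Q).+1)%N ->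
  (tmul ('X - a%:P) Q)`_k = - a * Q`_k + (if k is k'.+1 then Q`_k' ^+ q else 0).
Proof.
move=> hk; rewrite /tmul coef_poly size_XsubC /= hk.
rewrite big_ord_recl /= !coefE /= subn0 expn0 expr1.
case: k hk => [|k] hk; first by rewrite big_ord0 !addr0 sub0r mulNr.
rewrite big_ord_recl /= !coefE /= expn1 subSS subn0 big1 ?addr0.
  by rewrite sub0r subr0 mul1r mulNr.
move=> j _; rewrite !coefE /=; by rewrite subrr mul0r.
Qed.

Lemma size_tmulX (a : K) (Q : {poly K}) : (size (tmul ('X - a%:P) Q) <= (size Q).+1)%N.
Proof. by rewrite /tmul size_XsubC; apply: size_poly. Qed.

Lemma ev_tmulX (a : K) (Q : {poly K}) x :
  ev (tmul ('X - a%:P) Q) (size (tmul ('X - a%:P) Q)) x =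
  (ev Q (size Q) x) ^+ q - iota a * ev Q (size Q) x.
Proof.
rewrite -(ev_ext _ _ _ (size_tmulX a Q)) -(ev_ext Q _ _ (leqnSn _)) /ev.
rewrite (eq_bigr (fun k : 'I_(size Q).+1 => iota (- a) * (iota Q`_k * x ^+ (q ^ k)) +
   iota (if (k : nat) is k'.+1 then Q`_k' ^+ q else 0) * x ^+ (q ^ k))); last first.
  by move=> k _; rewrite coef_tmulX // rmorphD rmorphM mulrDl mulrA.
rewrite big_split /= -mulr_sumr.
rewrite addrC rmorphN mulNr.
congr (_ - _); rewrite big_ord_recl /= rmorph0 mul0r add0r frob_sum.
rewrite [RHS]big_ord_recr /= nth_default // rmorph0 !mul0r expr0n.
have -> : (q == 0)%N = false by case: q q_gt1.
rewrite addr0.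
apply: eq_bigr => k _; rewrite /bump /= add1n rmorphXn frobM.
by rewrite expnS mulnC exprM.
Qed.

Lemma tprod_facts (f : nat -> K) n :
  size (tprod (fun s => 'X - (f s)%:P) n) = n.+1 /\
  (tprod (fun s => 'X - (f s)%:P) n)`_n = 1 /\
  (tprod (fun s => 'X - (f s)%:P) n)`_0 = \prod_(s < n) (- f s).
Proof.
elim: n => [|n [hs [hl h0]]].
  by rewrite /= size_poly1 coef1 big_ord0.
rewrite /=; set Q := tprod _ n in hs hl h0 *.
have hl' : (tmul ('X - (f n)%:P) Q)`_n.+1 = 1.
  rewrite coef_tmulX ?hs // hl nth_default ?hs // mulr0 add0r expr1n; by [].
split; [|split] => //.
  apply/eqP; rewrite eqn_leq; apply/andP; split; first by rewrite -hs size_tmulX.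
  by rewrite ltnNge; apply/negP => /leq_sizeP /(_ n.+1 (leqnn _)); rewrite hl' => /eqP; rewrite oner_eq0.
by rewrite coef_tmulX ?hs // h0 addr0 big_ord_recr /= mulrC.
Qed.

Lemma tmul1l (Q : {poly K}) : tmul 1%:P Q = Q.
Proof.
apply/polyP => k; rewrite /tmul coef_poly size_polyC oner_neq0 /= /=.
case: ifP => hk; last by rewrite nth_default // leqNgt hk.
rewrite big_ord_recl /= coefC /= subn0 expn0 expr1 mul1r big1 ?addr0 //.
by move=> j _; rewrite coefC /= mul0r.
Qed.

Lemma tmul1r (Q : {poly K}) : tmul Q 1%:P = Q.
Proof.
apply/polyP => k; rewrite /tmul coef_poly size_polyC oner_neq0 /= addn1 /=.
case: ifP => hk; last by rewrite nth_default // leqNgt hk.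
rewrite big_ord_recr /= subnn coefC /= expr1n mulr1 big1 ?add0r //.
move=> j _; rewrite coefC subn_eq0 leqNgt ltn_ord /= expr0n .
have -> : (q ^ j == 0)%N = false by rewrite expn_eq0; case: q q_gt1.
by rewrite mulr0.
Qed.

Section Val.
Variables (v : K -> int) (hv : is_dval v).

Definition good (x : K) := (x == 0) || (0 <= v x)%R.

Lemma v1 : v 1 = 0.
Proof. have := hv.1 1 1 (oner_neq0 _) (oner_neq0 _); rewrite mul1r; lia. Qed.

Lemma vM x y : x != 0 -> y != 0 -> v (x * y) = v x + v y.
Proof. exact: hv.1. Qed.

Lemma vV x : x != 0 -> v x^-1 = - v x.
Proof.
move=> x0; have := vM _ _ x0 (invr_neq0 x0); rewrite mulfV // v1; lia.
Qed.

Lemma vN1 : v (-1) = 0.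
Proof.
have n1 : (-1 : K) != 0 by rewrite oppr_eq0 oner_eq0.
have := vM _ _ n1 n1; rewrite mulrNN mulr1 v1; lia.
Qed.

Lemma vXn x n : x != 0 -> v x = 0 -> v (x ^+ n) = 0.
Proof.
move=> x0 vx; elim: n => [|n IH]; first by rewrite expr0 v1.
by rewrite exprS vM ?expf_neq0 // vx IH.
Qed.

Lemma vXz x (z : int) : x != 0 -> v x = 0 -> v (x ^ z) = 0.
Proof.
move=> x0 vx; case: z => n /=; first exact: vXn.
by rewrite vV ?expf_neq0 // vXn.
Qed.

Lemma good0 : good 0. Proof. by rewrite /good eqxx. Qed.

Lemma good_v0 x : v x = 0 -> good x.
Proof. by move=> h; rewrite /good h lexx orbT. Qed.

Lemma goodM x y : good x -> good y -> good (x * y).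
Proof.
case/orP => [/eqP->|hx]; first by rewrite mul0r good0.
case/orP => [/eqP->|hy]; first by rewrite mulr0 good0.
have [->|x0] := eqVneq x 0; first by rewrite mul0r good0.
have [->|y0] := eqVneq y 0; first by rewrite mulr0 good0.
by rewrite /good vM // addr_ge0 ?orbT.
Qed.

Lemma goodD x y : good x -> good y -> good (x + y).
Proof.
case/orP => [/eqP->|hx]; first by rewrite add0r.
case/orP => [/eqP->|hy]; first by rewrite addr0 /good hx orbT.
have [->|x0] := eqVneq x 0; first by rewrite add0r /good hy orbT.
have [->|y0] := eqVneq y 0; first by rewrite addr0 /good hx orbT.
have [->|s0] := eqVneq (x + y) 0; first exact: good0.
apply/orP; right; apply: le_trans (hv.2.1 x y x0 y0 s0).
by rewrite le_min hx hy.
Qed.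

Lemma goodX x n : good x -> good (x ^+ n).
Proof. by move=> hx; elim: n => [|n IH]; [rewrite expr0 good_v0 // v1|rewrite exprS goodM]. Qed.

Lemma good_sum I (s : seq I) (P : pred I) (F : I -> K) :
  (forall j, P j -> good (F j)) -> good (\sum_(j <- s | P j) F j).
Proof. by move=> h; apply: (big_ind good) => //; [exact: good0|exact: goodD]. Qed.

Lemma good_tmul (P Q : {poly K}) : (forall j, good P`_j) -> (forall j, good Q`_j) ->
  forall k, good (tmul P Q)`_k.
Proof.
move=> hP hQ k; rewrite /tmul coef_poly; case: ifP => _; last exact: good0.
by apply: good_sum => j _; apply: goodM => //; apply: goodX.
Qed.

Lemma good_tprod (f : nat -> K) : (forall s, good (f s)) ->
  forall n k, good (tprod (fun s => 'X - (f s)%:P) n)`_k.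
Proof.
move=> hf; elim => [|n IH] k /=.
  by rewrite coefC; case: eqP => _; [apply: good_v0; exact: v1|exact: good0].
apply: good_tmul => // j; rewrite coefB coefX coefC.
have gN1 : good (-1) by apply: good_v0; exact: vN1.
have gN : forall y, good y -> good (- y) by move=> y hy; rewrite -mulN1r goodM.
apply: goodD; first by case: eqP => _; [apply: good_v0; exact: v1|exact: good0].
by apply: gN; case: eqP => _; [exact: hf|exact: good0].
Qed.
End Val.

Lemma tK_neq0 : tK K != 0.
Proof.
rewrite /tK /AtoK.
have h : (FracField.tofrac ('X : {poly Fq})) != 0 by rewrite tofrac_eq0 polyX_eq0.
by rewrite -(fmorph_eq0 (in_alg K)) in h.
Qed.

Lemma tO_neq0 : iota (tK K) != 0.
Proof. by rewrite fmorph_eq0 tK_neq0. Qed.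

Lemma q1 : (qq Fq)%:Z - 1 = (q.-1)%N.
Proof. by rewrite subzn ?subn1 // ltnW // q_gt1. Qed.

Section Chain.
Variables (i m : nat -> int).
Definition aa s : K := (- tK K) ^ (i s + m s * ((qq Fq)%:Z - 1)).
Definition T s (y : Om) := y ^+ q - iota (aa s) * y.
Fixpoint Lf n y := if n is n'.+1 then T n' (Lf n' y) else y.

Lemma ev_tprod n y :
  ev (tprod (fun s => 'X - (aa s)%:P) n) (size (tprod (fun s => 'X - (aa s)%:P) n)) y = Lf n y.
Proof.
elim: n => [|n IH] /=.
  by rewrite /ev size_poly1 big_ord1 coef1 /= rmorph1 mul1r expn0 expr1.
by rewrite ev_tmulX IH.
Qed.

Lemma TD s x y : T s (x + y) = T s x + T s y.
Proof. by rewrite /T frobD mulrDr opprD addrACA. Qed.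
Lemma T0 s : T s 0 = 0.
Proof. by rewrite /T expr0n mulr0 subr0; case: q q_gt1. Qed.
Lemma TZ s c y : T s (fqO iota c * y) = fqO iota c * T s y.
Proof. by rewrite /T frobM fqO_frob mulrBr mulrCA. Qed.
Lemma LfD n x y : Lf n (x + y) = Lf n x + Lf n y.
Proof. by elim: n => //= n ->; rewrite TD. Qed.
Lemma Lf0 n : Lf n 0 = 0.
Proof. by elim: n => //= n ->; rewrite T0. Qed.
Lemma LfZ n c y : Lf n (fqO iota c * y) = fqO iota c * Lf n y.
Proof. by elim: n => //= n ->; rewrite TZ. Qed.
Lemma LfN n y : Lf n (- y) = - Lf n y.
Proof. by apply/eqP; rewrite -subr_eq0 opprK -LfD addNr Lf0. Qed.
Lemma Lf_sum n k (A : nat -> Fq) (E : nat -> Om) :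
  Lf n (\sum_(j < k) fqO iota (A j) * E j) = \sum_(j < k) fqO iota (A j) * Lf n (E j).
Proof.
rewrite (big_morph (Lf n) (LfD n) (Lf0 n)); apply: eq_bigr => j _; exact: LfZ.
Qed.

Lemma T_surj s w : exists z, T s z == w.
Proof.
have [q2 hq2] : exists q2, q = q2.+2 by case: q q_gt1 => [|[|q2]] //; exists q2.
have [z hz] := @solve_monicpoly Om q (fun k => if k == 0%N then w else if k == 1%N then iota (aa s) else 0) (ltnW q_gt1).
exists z; move: hz; rewrite /T hq2 big_ord_recl big_ord_recl big1 /=.
  by rewrite /bump /= addr0 expr0 mulr1 expr1 => ->; rewrite addrK.
by move=> j _; rewrite mul0r.
Qed.

Lemma Lf_surj n w : exists y, Lf n y == w.
Proof.
elim: n w => [|n IH] w; first by exists w.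
have [z /eqP hz] := T_surj n w; have [y /eqP hy] := IH z.
by exists y => /=; rewrite hy hz.
Qed.

Section Lam.
Variables (lam : Om) (hlam : lam ^+ q.-1 = - iota (tK K)).

Lemma lam_neq0 : lam != 0.
Proof.
apply/negP => /eqP h; move: hlam; rewrite h expr0n.
case: q q_gt1 => [|[|q2]] //= _ /eqP; rewrite eq_sym oppr_eq0 (negPf tO_neq0) //.
Qed.

Definition ff s := lam ^ (i s) * (- iota (tK K)) ^ (m s).

Lemma mtO_neq0 : - iota (tK K) != 0.
Proof. by rewrite oppr_eq0 tO_neq0. Qed.

Lemma ff_neq0 s : ff s != 0.
Proof. by rewrite mulf_neq0 ?expfz_neq0 ?lam_neq0 ?mtO_neq0. Qed.

Lemma iota_aa s : iota (aa s) = (- iota (tK K)) ^ (i s + m s * ((qq Fq)%:Z - 1)).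
Proof. by rewrite /aa fmorphXz rmorphN. Qed.

Lemma ff_pow s : ff s ^+ q.-1 = iota (aa s).
Proof.
have u : - iota (tK K) \is a GRing.unit by rewrite unitfE mtO_neq0.
rewrite iota_aa /ff exprMn.
change ((lam ^ i s) ^ (q.-1:int) * ((- iota (tK K)) ^ m s) ^ (q.-1:int) = (- iota (tK K)) ^ (i s + m s * ((qq Fq)%:Z - 1))).
rewrite [X in X * _]exprzAC.
have -> : lam ^ (q.-1:int) = - iota (tK K) by exact: hlam.
by rewrite exprz_exp exprzDr // q1.
Qed.

Lemma T_ff s : T s (ff s) = 0.
Proof.
rewrite /T -ff_pow -exprSr prednK ?subrr //; exact: ltnW q_gt1.
Qed.

Definition ee s : Om := xchoose (Lf_surj s (ff s)).

Lemma Lf_ee s : Lf s (ee s) = ff s.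
Proof. exact/eqP/(xchooseP (Lf_surj s (ff s))). Qed.

Lemma Lf_ee0 s n : (s < n)%N -> Lf n (ee s) = 0.
Proof.
elim: n => // n IH; rewrite ltnS leq_eqVlt => /orP[/eqP->|h] /=.
  by rewrite Lf_ee T_ff.
by rewrite IH // T0.
Qed.

Lemma frob_from_pow (z : Om) : z ^+ q.-1 = 1 -> z ^+ q = z.
Proof. by move=> h; rewrite -(prednK (ltnW q_gt1)) exprSr h mul1r. Qed.

Lemma kerT s y : T s y = 0 -> exists c, y = fqO iota c * ff s.
Proof.
move=> hy; have [->|y0] := eqVneq y 0; first by exists 0; rewrite fqOE rmorph0 mul0r.
have f0 := ff_neq0 s.
have hq : forall z : Om, z ^+ q = z ^+ q.-1 * z by move=> z; rewrite -exprSr prednK // ltnW // q_gt1.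
have hyq : y ^+ q = iota (aa s) * y by apply/eqP; rewrite -subr_eq0; apply/eqP.
have : (y / ff s) ^+ q = y / ff s.
  rewrite expr_div_n hyq hq ff_pow -mulf_div divff ?mul1r //.
  by rewrite -ff_pow expf_neq0.
case/fixq_fq => c hc; exists c; by rewrite -hc divfK.
Qed.

Lemma span n y : Lf n y = 0 -> exists A : nat -> Fq, y = \sum_(j < n) fqO iota (A j) * ee j.
Proof.
elim: n y => [|n IH] y /=; first by move=> ->; exists (fun _ => 0); rewrite big_ord0.
move/kerT => [c hc].
have : Lf n (y - fqO iota c * ee n) = 0 by rewrite LfD LfN LfZ Lf_ee hc subrr.
case/IH => A hA; exists (fun j => if j == n then c else A j).
rewrite big_ord_recr /= eqxx; apply/eqP; rewrite -subr_eq; apply/eqP; rewrite hA.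
by apply: eq_bigr => j _; rewrite ltn_eqF.
Qed.

Lemma indep n (A : nat -> Fq) : \sum_(j < n) fqO iota (A j) * ee j = 0 ->
  forall j, (j < n)%N -> A j = 0.
Proof.
elim: n => [|n IH] // h.
have hn : A n = 0.
  have := congr1 (Lf n) h; rewrite Lf0 big_ord_recr /= LfD Lf_sum big1 ?add0r.
    rewrite LfZ Lf_ee => /eqP; rewrite mulf_eq0 (negPf (ff_neq0 n)) orbF => /eqP.
    by rewrite fqOE -(rmorph0 (fqrm)) => /fmorph_inj.
  by move=> j _; rewrite Lf_ee0 // mulr0.
move: h; rewrite big_ord_recr /= hn fqOE rmorph0 mul0r addr0 => h j.
rewrite ltnS leq_eqVlt => /orP[/eqP->//|]; exact: IH.
Qed.

Section Sigma.
Variables (sigma : {rmorphism Om -> Om}) (hs : is_Kaut iota sigma).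

Lemma sigma_fq c : sigma (fqO iota c) = fqO iota c.
Proof. exact: hs.2. Qed.

Lemma sigma_T s y : sigma (T s y) = T s (sigma y).
Proof. by rewrite /T rmorphB rmorphM rmorphXn hs.2. Qed.

Lemma sigma_Lf n y : sigma (Lf n y) = Lf n (sigma y).
Proof. by elim: n => //= n <-; rewrite sigma_T. Qed.

Lemma sigma_mt : sigma (- iota (tK K)) = - iota (tK K).
Proof. by rewrite rmorphN hs.2. Qed.

Lemma sigma_lam : exists c : Fq, c != 0 /\ sigma lam = fqO iota c * lam.
Proof.
have l0 := lam_neq0.
have : (sigma lam / lam) ^+ q.-1 = 1.
  by rewrite expr_div_n -rmorphXn hlam sigma_mt divff // mtO_neq0.
move/frob_from_pow/fixq_fq => [c hc]; exists c; split; last by rewrite -hc divfK.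
apply/eqP => c0; move: hc; rewrite c0 fqOE rmorph0 => /eqP.
by rewrite mulf_eq0 invr_eq0 (negPf l0) orbF fmorph_eq0 (negPf l0).
Qed.

Lemma sigma_ff c s : sigma lam = fqO iota c * lam -> c != 0 ->
  sigma (ff s) = fqO iota (c ^ i s) * ff s.
Proof.
move=> hc c0; have l0 := lam_neq0.
have uc : fqO iota c \is a GRing.unit by rewrite unitfE fqOE fmorph_eq0.
rewrite /ff rmorphM !fmorphXz sigma_mt hc .
rewrite exprzMl //; last by rewrite unitfE.
by rewrite !fqOE fmorphXz mulrA.
Qed.

Lemma sigma_carlitz c : sigma lam = fqO iota c * lam ->
  forall x, carlitz_tors iota x -> sigma x = fqO iota c * x.
Proof.
move=> hc x; rewrite /carlitz_tors => /eqP hx.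
have [->|x0] := eqVneq x 0; first by rewrite rmorph0 mulr0.
have l0 := lam_neq0.
have hq : forall z : Om, z ^+ q = z ^+ q.-1 * z by move=> z; rewrite -exprSr prednK // ltnW // q_gt1.
have hx1 : x ^+ q.-1 = - iota (tK K).
  apply: (mulIf x0); rewrite -hq mulNr; apply/eqP; rewrite -addr_eq0 addrC hx //.
have : (x / lam) ^+ q.-1 = 1 by rewrite expr_div_n hx1 hlam divff // mtO_neq0.
move/frob_from_pow/fixq_fq => [d hd].
have -> : x = fqO iota d * lam by rewrite -hd divfK.
by rewrite rmorphM sigma_fq hc mulrCA.
Qed.

Lemma sigma_tri c s : sigma lam = fqO iota c * lam -> c != 0 ->
  exists B : nat -> Fq, sigma (ee s) =
    \sum_(u < s) fqO iota (B u) * ee u + fqO iota (c ^ i s) * ee s.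
Proof.
move=> hc c0.
have : Lf s (sigma (ee s) - fqO iota (c ^ i s) * ee s) = 0.
  by rewrite LfD LfN LfZ -sigma_Lf Lf_ee (sigma_ff c s hc c0) subrr.
case/span => B hB; exists B; by rewrite -hB subrK.
Qed.
End Sigma.
End Lam.
End Chain.
End Frob.

Lemma exists_lam (Fq : finFieldType) (K : fieldExtType (FF Fq)) (Om : closedFieldType)
  (iota : {rmorphism K -> Om}) :
  exists lam : Om, lam ^+ (qq Fq).-1 = - iota (tK K).
Proof.
have [q2 hq2] : exists q2, (qq Fq).-1 = q2.+1.
  by case: (qq Fq) (q_gt1 Fq) => [|[|q2]] //; exists q2.
have [z hz] := @solve_monicpoly Om (qq Fq).-1 (fun k => if k == 0%N then - iota (tK K) else 0) ltac:(by rewrite hq2).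
exists z; rewrite hz hq2 big_ord_recl big1 /= ?expr0 ?mulr1 ?addr0 //.
by move=> j _; rewrite mul0r.
Qed.

Lemma tri_main (Fq : finFieldType) (K : fieldExtType (FF Fq))
  (Om : closedFieldType) (iota : {rmorphism K -> Om})
  (r : nat) (hr : (0 < r)%N) (i m : nat -> int) (diag : Fq -> 'I_r -> Fq)
  (hd : forall c s, c != 0 -> diag c s = c ^ (i s)) :
  tri_rep iota (phim_t K r i m) diag.
Proof.
have hP : phim_t K r i m = (-1) ^+ r.-1 *: tprod (fun s => 'X - (aa Fq K i m s)%:P) r by [].
have c0 : ((-1) ^+ r.-1 : K) != 0 by rewrite expf_neq0 // oppr_eq0 oner_eq0.
have htors : forall x, tors iota (phim_t K r i m) x = (Lf Fq K Om iota i m r x == 0).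
  move=> x; rewrite /tors.
  change ((ev Fq K Om iota (phim_t K r i m) (size (phim_t K r i m)) x == 0) = (Lf Fq K Om iota i m r x == 0)).
  by rewrite hP ev_scale // ev_tprod mulf_eq0 fmorph_eq0 (negPf c0).
have [lam hlam] := exists_lam _ _ _ iota.
exists (fun s : 'I_r => ee Fq K Om iota i m lam (val s)).
split; [|split; [|split]].
- by move=> s; rewrite htors (@Lf_ee0 _ _ _ iota i m lam hlam _ _ (ltn_ord s)).
- move=> a ha s.
  pose A n := a (insubd (Ordinal hr) n).
  have hA : forall s : 'I_r, A s = a s by move=> u; rewrite /A valKd.
  have := @indep _ _ _ iota i m lam hlam r A.
  rewrite (eq_bigr (fun s : 'I_r => fqO iota (a s) * ee Fq K Om iota i m lam s)); last by move=> u _; rewrite hA.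
  by move/(_ ha s (ltn_ord s)); rewrite hA.
- move=> x; rewrite htors => /eqP /(@span _ _ _ iota i m lam hlam) [A hA]; by exists (fun s => A s).
- move=> sigma hs.
  have [c [cn0 hc]] := @sigma_lam _ _ _ iota lam hlam sigma hs.
  exists c; split => //; split; first exact: (@sigma_carlitz _ _ _ iota lam hlam sigma hs c hc).
  move=> s; have [B hB] := @sigma_tri _ _ _ iota i m lam hlam sigma hs c (val s) hc cn0.
  exists (fun u => B u); rewrite hB hd //; congr (_ + _).
  by rewrite (big_ord_narrow (ltnW (ltn_ord s))).
Qed.

Lemma rank_part (Fq : finFieldType) (K : fieldExtType (FF Fq))
  (r : nat) (hr : (0 < r)%N) (i m : nat -> int)
  (hi : \sum_(s < r) i s = 1) (hm : \sum_(s < r) m s = 0) :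
  is_drinfeld_rank r (phim_t K r i m).
Proof.
have hP : phim_t K r i m = (-1) ^+ r.-1 *: tprod (fun s => 'X - (aa Fq K i m s)%:P) r by [].
have c0 : ((-1) ^+ r.-1 : K) != 0 by rewrite expf_neq0 // oppr_eq0 oner_eq0.
have [hs [hl h0]] := tprod_facts Fq K (aa Fq K i m) r.
rewrite /is_drinfeld_rank hP size_scale // hs coefZ h0; split => //.
have u : (- tK K) \is a GRing.unit by rewrite unitfE oppr_eq0 tK_neq0.
rewrite (eq_bigr (fun s : 'I_r => (-1) * aa Fq K i m s)); last by move=> s _; rewrite mulN1r.
rewrite big_split /= prodr_const card_ord.
rewrite /aa -(big_morph (fun z : int => (- tK K) ^ z) (exprzDr u) (expr0z _)).
rewrite big_split /= -mulr_suml hi hm mul0r addr0 expr1z.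
clear -hr; case: r hr => // r _ /=.
have e : ((-1) ^+ r * (-1) ^+ r : K) = 1 by rewrite -exprMn mulrNN mulr1 expr1n.
by rewrite exprS mulN1r mulrNN mulrA e mul1r.
Qed.

Lemma D1_part (Fq : finFieldType) (K : fieldExtType (FF Fq))
  (r : nat) (i m : nat -> int) : D1 r (phim_t K r i m).
Proof.
have hP : phim_t K r i m = (-1) ^+ r.-1 *: tprod (fun s => 'X - (aa Fq K i m s)%:P) r by [].
have c0 : ((-1) ^+ r.-1 : K) != 0 by rewrite expf_neq0 // oppr_eq0 oner_eq0.
have [hs [hl h0]] := tprod_facts Fq K (aa Fq K i m) r.
move=> v hv fp hna.
have vt : v (tK K) = 0.
  have h1 : (0 <= v (tK K))%R := fp 'X (negbT (polyX_eq0 _)).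
  move: hna; rewrite /above_t lt_def h1 andbT => /negP; rewrite negbK => /eqP; by move=> <-.
have gN1 : good Fq K v (-1) by apply: good_v0; exact: vN1.
have vmt : v (- tK K) = 0.
  by rewrite -mulN1r vM // ?oppr_eq0 ?oner_eq0 ?tK_neq0 // (vN1 _ _ _ hv) vt.
have ga : forall s, good Fq K v (aa Fq K i m s).
  by move=> s; apply: good_v0; apply: (vXz _ _ _ hv); [rewrite oppr_eq0 tK_neq0|exact: vmt].
exists 1; split; first exact: oner_neq0.
cbv zeta; rewrite invr1 tmul1r tmul1l hP.
split; [|split].
- move=> j _; rewrite coefZ.
  have : good Fq K v ((-1) ^+ r.-1 * (tprod (fun s => 'X - (aa Fq K i m s)%:P) r)`_j).
    by apply: goodM => //; [apply: goodX|apply: good_tprod].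
  by case/orP => [/eqP->|h]; [left|right].
- by rewrite coefZ hl mulr1.
- rewrite coefZ hl mulr1 vXn //; last exact: (vN1 _ _ _ hv).
  by rewrite oppr_eq0 oner_eq0.
Qed.

Theorem proposition5p14 (Fq : finFieldType) (K : fieldExtType (FF Fq))
  (Om : closedFieldType) (iota : {rmorphism K -> Om})
  (r : nat) (hr : (0 < r)%N) (i m : nat -> int)
  (hi : \sum_(s < r) i s = 1) (hm : \sum_(s < r) m s = 0) :
  is_drinfeld_rank r (phim_t K r i m) /\
  in_D iota r (phim_t K r i m) /\
  tri_rep iota (phim_t K r i m) (fun (c : Fq) (s : 'I_r) => c ^ (i s)).
Proof.
have hR := rank_part Fq K r hr i m hi hm.
have hT := tri_main Fq K Om iota r hr i m (fun (c : Fq) (s : 'I_r) => c ^ (i s)) (fun _ _ _ => erefl).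
split => //; split => //; split => //; split; first exact: D1_part Fq K r i m.
have qpos : ((qq Fq).-1%:Z != 0) by rewrite eqz_nat -lt0n -subn1 subn_gt0 q_gt1.
exists (fun s => `|(i s %% (qq Fq).-1%:Z)%Z|%N); split.
  move=> s; rewrite subn1 -ltnS prednK ?(ltnW (q_gt1 Fq)) //.
  rewrite -ltz_nat gez0_abs ?modz_ge0 //.
  apply: lt_le_trans (ltz_mod _ qpos) _.
  by rewrite ger0_norm // lez_nat leq_pred.
apply: (tri_main Fq K Om iota r hr i m (fun c s => c ^+ `|(i s %% (qq Fq).-1%:Z)%Z|%N)) => c s c0.
have hc1 : c ^+ (qq Fq).-1 = 1.
  by apply: (mulIf c0); rewrite -exprSr prednK ?(ltnW (q_gt1 Fq)) // expf_card mul1r.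
have uc : c \is a GRing.unit by rewrite unitfE.
rewrite {2}(divz_eq (i s) (qq Fq).-1%:Z) exprzDr // mulrC -exprz_exp.
rewrite exprzAC.
have -> : c ^ ((qq Fq).-1 : int) = 1 by exact: hc1.
rewrite exp1rz mulr1.
have hx := gez0_abs (modz_ge0 (i s) qpos).
by rewrite -[in RHS]hx.
Qed.
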